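(* Let $P\in\mathbb{C}[y]$ with $\deg P\geq 2$, $\delta\in\mathbb{C}\setminus\{0\}$, $h_1(x,y)=(y,P(y)-\delta x)$, $\theta\in(0,2\pi)\setminus\{\frac{\pi}{2},\pi,\frac{3\pi}{2}\}$, $R_\theta$ the linear map of $\mathbb{C}^2$ with matrix $\begin{pmatrix}\cos\theta&-\sin\theta\\ \sin\theta&\cos\theta\end{pmatrix}$, $h_2=R_\theta^{-1}\circ h_1\circ R_\theta$ and $G=\langle h_1,h_2\rangle$. Let $\nu=a_1\delta_{h_1}+a_2\delta_{h_2}+a_3\delta_{h_1^{-1}}+a_4\delta_{h_2^{-1}}$ with $a_i>0$ and $\sum_{i=1}^4a_i=1$, and equip $G^{\mathbb{N}}$ with the product measure $\nu^{\mathbb{N}}$. For $\omega=(\omega_n)\in G^{\mathbb{N}}$ put $S_n(\omega)=\omega_n\circ\cdots\circ\omega_1$. Then for $\nu^{\mathbb{N}}$-almost every $\omega$ the sequence $(\mathrm{length}(S_n(\omega)))_{n\in\mathbb{N}}$ is unbounded; in fact there is $\epsilon>0$ such that for $\nu^{\mathbb{N}}$-almost every $\omega$ one has $\mathrm{length}(S_n(\omega))\geq\epsilon n$ for all sufficiently large $n$.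
   Context: $\mathrm{length}(g)$ for $g\in G$ denotes the length of $g$ as a reduced word in the letters $h_1^{\pm1},h_2^{\pm1}$. *)

(* Defs.v *)
From HB Require Import structures.
From mathcomp Require Import all_boot all_order all_algebra.
From mathcomp Require Import all_classical all_reals all_analysis.
From mathcomp Require Import complex.
Set Implicit Arguments. Unset Strict Implicit. Unset Printing Implicit Defensive.
Import Order.TTheory GRing.Theory Num.Theory.
Local Open Scope ring_scope.
Local Open Scope classical_set_scope.

Section Henon.
Variable R : realType.
Local Notation C := R[i].

Definition pt := (C * C)%type.

Definition h1 (P : {poly C}) (delta : C) (z : pt) : pt :=
  (z.2, P.[z.2] - delta * z.1).

Definition h1inv (P : {poly C}) (delta : C) (z : pt) : pt :=
  ((P.[z.1] - z.2) / delta, z.1).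

Local Open Scope complex_scope.
Definition rot (t : R) (z : pt) : pt :=
  ((cos t)%:C * z.1 - (sin t)%:C * z.2, (sin t)%:C * z.1 + (cos t)%:C * z.2).

Definition rotinv (t : R) (z : pt) : pt := rot (- t) z.

Definition h2 P delta t : pt -> pt := rotinv t \o h1 P delta \o rot t.
Definition h2inv P delta t : pt -> pt := rotinv t \o h1inv P delta \o rot t.

Definition letter P delta t (l : 'I_4) : pt -> pt :=
  match val l with
  | 0%N => h1 P delta
  | 1%N => h2 P delta t
  | 2%N => h1inv P delta
  | _ => h2inv P delta t
  end.

Definition word_eval P delta t (s : seq 'I_4) : pt -> pt :=
  foldr (fun l f => letter P delta t l \o f) id s.

(* length of g: least length of a word in h1^{+-1}, h2^{+-1} representing g
   (= length of the reduced word representing g); 0 if g is not in G *)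
Definition word_length P delta t (g : pt -> pt) : nat :=
  let rep := fun n : nat =>
    `[< exists s : seq 'I_4, size s = n /\ word_eval P delta t s = g >] in
  match pselect (exists n, rep n) with
  | left H => ex_minn H
  | right _ => 0%N
  end.

(* S_n(omega) = omega_n o ... o omega_1  (here omega_{k+1} = letter (X k w)) *)
Fixpoint walk P delta t (X : nat -> 'I_4) (n : nat) : pt -> pt :=
  match n with
  | 0%N => id
  | n'.+1 => letter P delta t (X n') \o walk P delta t X n'
  end.

End Henon.

(* X is an i.i.d. sequence of letters with law a, i.e. the law of (X n)_n is
   the product measure nu^N (nu = sum_i a_i delta_{letter i}). *)
Definition iid_letters (R : realType) (d : measure_display) (T : measurableType d)
  (Pr : probability T R) (X : nat -> T -> 'I_4) (a : 'I_4 -> R) : Prop :=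
  (forall (k : nat) (l : 'I_4), measurable (X k @^-1` [set l])) /\
  (forall (n : nat) (x : 'I_n -> 'I_4),
     Pr [set w | forall k : 'I_n, X k w = x k] = (\prod_(k < n) a (x k))%:E).

(* Main.v *)
Require Import Defs.
From HB Require Import structures.
From mathcomp Require Import all_boot all_order all_algebra.
From mathcomp Require Import all_classical all_reals all_analysis.
From mathcomp Require Import complex.
From mathcomp Require Import ring lra.
Import Order.TTheory GRing.Theory Num.Theory.
Local Open Scope ring_scope.
Local Open Scope classical_set_scope.

Module MH1.
Local Open Scope ring_scope.
Local Open Scope ring_scope.
Set Implicit Arguments. Unset Strict Implicit. Unset Printing Implicit Defensive.

Section Trig.
Variable R : realType.

Lemma sin_neq0 (t : R) : 0 < t -> t < 2 * pi -> t != pi -> sin t != 0.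
Proof.
move=> t0 t2 tpi.
have pi0 : (0 : R) < pi := pi_gt0 R.
have [tl|tg] := ltP t pi.
  by rewrite gt_eqF // sin_gt0_pi // t0 tl.
have tg' : pi < t by rewrite lt_neqAle eq_sym tpi tg.
have -> : t = (t - pi) + pi by rewrite subrK.
rewrite sinDpi oppr_eq0 gt_eqF // sin_gt0_pi //.
apply/andP; split; lra.
Qed.

Lemma cos_neq0 (t : R) : 0 < t -> t < 2 * pi -> t != pi / 2 -> t != 3 * pi / 2 ->
  cos t != 0.
Proof.
move=> t0 t2 th t3h.
have pi0 : (0 : R) < pi := pi_gt0 R.
have [tl|tg] := ltP t (pi / 2).
  by rewrite gt_eqF // cos_gt0_pihalf //; apply/andP; split; lra.
have tg' : pi / 2 < t by rewrite lt_neqAle eq_sym th tg.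
have [tl2|tg2] := ltP t (3 * pi / 2).
  have -> : t = (t - pi) + pi by rewrite subrK.
  rewrite cosDpi oppr_eq0 gt_eqF // cos_gt0_pihalf //.
  apply/andP; split; lra.
have tg2' : 3 * pi / 2 < t by rewrite lt_neqAle eq_sym t3h tg2.
have -> : t = (t - pi *+ 2) + pi *+ 2 by rewrite subrK.
rewrite cosD2pi gt_eqF // cos_gt0_pihalf //.
apply/andP; split; rewrite -mulr_natl; lra.
Qed.

End Trig.

End MH1.
Import MH1.

Module MH3.
Local Open Scope ring_scope.
Local Open Scope ring_scope.
Set Implicit Arguments. Unset Strict Implicit. Unset Printing Implicit Defensive.

Definition invl (l : 'I_4) : 'I_4 := Ordinal (ltn_pmod (l + 2) (isT : (0 < 4)%N)).

Lemma invlK : involutive invl.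
Proof. by case=> [[|[|[|[|n]]]] Hl] //; apply: val_inj. Qed.

Definition push (l : 'I_4) (st : seq 'I_4) :=
  if st is m :: st' then (if m == invl l then st' else l :: st) else [:: l].

Definition red (s : seq 'I_4) := foldr push [::] s.

Fixpoint reduced (s : seq 'I_4) : bool :=
  match s with
  | l :: ((m :: _) as s') => (m != invl l) && reduced s'
  | _ => true
  end.

Definition invw (s : seq 'I_4) := rev (map invl s).

Lemma reduced_cons l s : reduced (l :: s) -> reduced s.
Proof. by case: s => //= m s /andP[]. Qed.

Lemma push_reduced l st : reduced st -> reduced (push l st).
Proof.
case: st => //= m st Hr; case: ifP => Hm; first exact: reduced_cons Hr.
by rewrite /= Hm Hr.
Qed.

Lemma red_reduced s : reduced (red s).
Proof. by elim: s => //= l s IH; apply: push_reduced. Qed.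

Lemma size_push l st : (size st <= (size (push l st)).+1)%N.
Proof. by case: st => //= m st; case: ifP => //= _; rewrite ltnW. Qed.

Lemma size_foldr_push w st : (size st <= size (foldr push st w) + size w)%N.
Proof.
elim: w => [|l w IH] /=; first by rewrite addn0.
apply: (leq_trans IH); rewrite addnS -addSn leq_add2r; exact: size_push.
Qed.

Section Eval.
Variable R : realType.
Variables (P : {poly R[i]}) (delta : R[i]) (t : R).
Hypothesis letterK : forall l z, letter P delta t l (letter P delta t (invl l) z) = z.

Local Notation ev := (word_eval P delta t).
Local Notation let_ := (letter P delta t).

Lemma letterVK l z : let_ (invl l) (let_ l z) = z.
Proof. by rewrite -{2}(invlK l) letterK. Qed.

Lemma ev_cons l s z : ev (l :: s) z = let_ l (ev s z).
Proof. by []. Qed.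

Lemma ev_cat s1 s2 z : ev (s1 ++ s2) z = ev s1 (ev s2 z).
Proof. by elim: s1 => //= l s1 IH; rewrite /comp -IH. Qed.

Lemma ev_push l st z : ev (push l st) z = let_ l (ev st z).
Proof.
case: st => //= m st; case: ifP => //= /eqP ->.
by rewrite /comp letterK.
Qed.

Lemma ev_red s z : ev (red s) z = ev s z.
Proof. by elim: s => //= l s IH; rewrite ev_push IH. Qed.

Lemma ev_invw s z : ev (invw s) (ev s z) = z.
Proof.
elim: s z => //= l s IH z.
rewrite /invw /= rev_cons -cats1 ev_cat /=.
by rewrite /comp letterVK IH.
Qed.

Hypothesis free : forall s, reduced s -> (forall z, ev s z = z) -> s = [::].

Lemma word_length_ge u : (size (red u) <= word_length P delta t (ev u))%N.
Proof.
rewrite /word_length; case: pselect => [H|H]; last first.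
  by exfalso; apply: H; exists (size u); apply/asboolP; exists u.
case: ex_minnP => m /asboolP [s [hs he]] _; rewrite -hs.
have e0 : red (invw s ++ u) = [::].
  apply: free; first exact: red_reduced.
  by move=> z; rewrite ev_red ev_cat -he ev_invw.
have := size_foldr_push (invw s) (red u).
by rewrite -foldr_cat -/(red _) e0 /invw size_rev size_map.
Qed.

End Eval.

End MH3.
Import MH3.

Module MH2.
Local Open Scope ring_scope.
Local Open Scope ring_scope.

Set Implicit Arguments. Unset Strict Implicit. Unset Printing Implicit Defensive.

Section Rot.
Variable R : realType.


Lemma rotK (t : R) (z : pt R) : Defs.rot t (Defs.rot (- t)%R z) = z.
Proof.
case: z => x y; rewrite /Defs.rot /= cosN sinN rmorphN /=.
set C := (cos t)%:C%C; set S := (sin t)%:C%C.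
have H : C * C + S * S = 1.
  by rewrite /C /S -!rmorphM -rmorphD /= -!expr2 cos2Dsin2.
congr pair.
  by transitivity (x * (C * C + S * S)); [ring | rewrite H mulr1].
by transitivity (y * (C * C + S * S)); [ring | rewrite H mulr1].
Qed.

Lemma rotKV (t : R) (z : pt R) : Defs.rot (- t)%R (Defs.rot t z) = z.
Proof. by rewrite -{2}(opprK t) rotK. Qed.

Variables (P : {poly R[i]}) (delta : R[i]) (t : R).
Hypothesis d0 : delta != 0.

Lemma h1K z : h1 P delta (h1inv P delta z) = z.
Proof.
case: z => x y; rewrite /h1 /h1inv /=; congr pair.
by rewrite mulrC divfK // opprB addrC subrK.
Qed.

Lemma h1invK z : h1inv P delta (h1 P delta z) = z.
Proof.
case: z => x y; rewrite /h1 /h1inv /=; congr pair.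
by rewrite opprB addrC subrK (mulrC delta) mulfK.
Qed.

Lemma letterK l z : letter P delta t l (letter P delta t (invl l) z) = z.
Proof.
case: l => [[|[|[|[|n]]]] Hl] //; rewrite /letter /=.
- exact: h1K.
- by rewrite /h2 /h2inv /rotinv /= rotK h1K rotKV.
- exact: h1invK.
- by rewrite /h2 /h2inv /rotinv /= rotK h1invK rotKV.
Qed.


End Rot.

End MH2.
Import MH2.

Module MH4.
Local Open Scope ring_scope.
Local Open Scope ring_scope.
Set Implicit Arguments. Unset Strict Implicit. Unset Printing Implicit Defensive.

Section Norms.
Variable R : realType.
Definition nc (z : R[i]) : R := ComplexField.Normc.normc z.

Lemma nc_ge0 z : 0 <= nc z.
Proof. by case: z => a b; rewrite /nc /= sqrtr_ge0. Qed.

Lemma ncM x y : nc (x * y) = nc x * nc y.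
Proof. exact: ComplexField.Normc.normcM. Qed.

Lemma ncV x : nc (x^-1) = (nc x)^-1.
Proof. exact: ComplexField.Normc.normcV. Qed.

Lemma ncD x y : nc (x + y) <= nc x + nc y.
Proof. exact: (@le_normcD R x y). Qed.

Lemma ncN x : nc (- x) = nc x.
Proof. exact: (@normcN R x). Qed.

Lemma nc0 : nc 0 = 0.
Proof. exact: ComplexField.Normc.normc0. Qed.

Lemma nc1 : nc 1 = 1.
Proof. exact: ComplexField.Normc.normc1. Qed.

Lemma nc_eq0 x : (nc x == 0) = (x == 0).
Proof.
apply/eqP/eqP => [|->]; last exact: nc0.
exact: ComplexField.Normc.eq0_normc.
Qed.

Lemma ncR (a : R) : nc (a%:C)%C = `|a|.
Proof. by rewrite /nc /= expr0n /= addr0 sqrtr_sqr. Qed.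

Lemma ncX x n : nc (x ^+ n) = nc x ^+ n.
Proof. by elim: n => [|n IH]; rewrite ?expr0 ?nc1 // !exprS ncM IH. Qed.

Lemma ncB x y : nc (x - y) <= nc x + nc y.
Proof. by rewrite -(ncN y) ncD. Qed.

Lemma ncBl x y : nc x - nc y <= nc (x - y).
Proof.
have := ncD (x - y) y; rewrite subrK; lra.
Qed.

Lemma nc_sum I (r : seq I) (F : I -> R[i]) :
  nc (\sum_(i <- r) F i) <= \sum_(i <- r) nc (F i).
Proof.
elim: r => [|i r IH]; first by rewrite !big_nil nc0.
rewrite !big_cons; apply: (le_trans (ncD _ _)); lra.
Qed.

Lemma nc_lin_ub (a b : R) x y :
  nc ((a%:C)%C * x + (b%:C)%C * y) <= `|a| * nc x + `|b| * nc y.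
Proof. by apply: (le_trans (ncD _ _)); rewrite !ncM !ncR. Qed.

Lemma nc_lin_lb (a b : R) x y :
  `|b| * nc y - `|a| * nc x <= nc ((a%:C)%C * x + (b%:C)%C * y).
Proof.
have := ncBl ((b%:C)%C * y) (-((a%:C)%C * x)).
by rewrite opprK ncN !ncM !ncR [(b%:C)%C * y + _]addrC; lra.
Qed.

End Norms.

Lemma Lgen (R : realType) (x y eta P1 Q1 Q2 P2 : R) :
  0 <= x -> 0 <= y -> 0 < eta -> 3 * eta <= P1 -> P1 <= 1 -> 0 <= Q1 -> Q1 <= 1 ->
  0 <= Q2 -> Q2 <= 1 -> 0 <= P2 -> P2 <= 1 ->
  x < eta * y -> P1 * y - Q1 * x < eta * (Q2 * x + P2 * y) -> False.
Proof.
move=> x0 y0 e0 hP1 p11 q10 q11 q20 q21 p20 p21 hx h.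
have h1 : Q1 * x <= x by nra.
have h2 : Q2 * x <= x by nra.
have h3 : P2 * y <= y by nra.
have h4 : eta * (Q2 * x) <= eta * x by nra.
have h5 : eta * (P2 * y) <= eta * y by nra.
have h6 : eta * x <= eta * (eta * y) by nra.
have h7 : eta * eta * y <= eta * y / 3 by nra.
nra.
Qed.

End MH4.
Import MH4.

Module MH5.
Local Open Scope ring_scope.
Local Open Scope ring_scope.
Set Implicit Arguments. Unset Strict Implicit. Unset Printing Implicit Defensive.

Section Poly.
Variable R : realType.
Variable P : {poly R[i]}.
Hypothesis sP : (2 < size P)%N.

Let d := (size P).-1.
Let Sc := \sum_(i < d) nc P`_i.

Lemma Sc_ge0 : 0 <= Sc.
Proof. by apply: sumr_ge0 => i _; exact: nc_ge0. Qed.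

Lemma nclc_gt0 : 0 < nc (lead_coef P).
Proof.
rewrite lt_def nc_ge0 andbT nc_eq0 lead_coef_eq0 -size_poly_eq0.
by rewrite -lt0n (ltn_trans _ sP).
Qed.

Lemma poly_lb y : 1 <= nc y ->
  nc y * (nc (lead_coef P) * nc y - Sc) <= nc P.[y].
Proof.
move=> y1.
have sd : size P = d.+1 by rewrite /d prednK // (ltn_trans _ sP).
have d2 : (2 <= d)%N by rewrite -ltnS -sd.
rewrite (horner_coef_wide y (_ : size P <= d.+1)%N) ?sd // big_ord_recr /=.
set A := \sum_(i < d) _.
have hlc : P`_d = lead_coef P by [].
rewrite hlc.
have hA : nc A <= Sc * nc y ^+ d.-1.
  apply: (le_trans (nc_sum _ _)); rewrite /Sc big_distrl /=.
  apply: ler_sum => i _; rewrite ncM ncX ler_wpM2l ?nc_ge0 //.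
  by apply: ler_weXn2l => //; rewrite -ltnS prednK ?ltn_ord // (ltn_trans _ d2).
have hL : nc (lead_coef P * y ^+ d) = nc (lead_coef P) * (nc y * nc y ^+ d.-1).
  by rewrite ncM ncX -exprS prednK // (ltn_trans _ d2).
have hB := ncBl (lead_coef P * y ^+ d) (- A).
rewrite opprK ncN hL [lead_coef P * _ + A]addrC in hB.
have hE : nc y <= nc y ^+ d.-1 by apply: ler_eXnr => //; rewrite -ltnS prednK // (ltn_trans _ d2).
have h0 := nc_ge0 (A + lead_coef P * y ^+ d).
have hlc0 := nclc_gt0.
have hS := Sc_ge0.
set E := nc y ^+ d.-1 in hA hB hE.
set Y := nc y in y1 hB hE hA *.
set Lc := nc (lead_coef P) in hB hlc0 *.
have [hb|hb] := leP 0 (Lc * Y - Sc).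
  have : Y * (Lc * Y - Sc) <= E * (Lc * Y - Sc) by apply: ler_wpM2r.
  nra.
nra.
Qed.

Lemma poly_growth (alpha : R[i]) (M L : R) : 0 <= M ->
  exists R0 : R, 1 <= R0 /\ forall y v, R0 <= nc y -> nc v <= M * nc y ->
    L * nc y < nc (P.[y] - alpha * v).
Proof.
move=> M0.
have hlc0 := nclc_gt0.
have hS := Sc_ge0.
set Lc := nc (lead_coef P) in hlc0 *.
have ha := nc_ge0 alpha.
exists (1 + (`|L| + Sc + nc alpha * M) / Lc); split.
  rewrite lerDl divr_ge0 ?(ltW hlc0) //.
  by rewrite !addr_ge0 ?mulr_ge0.
move=> y v hy hv.
have hnum : 0 <= `|L| + Sc + nc alpha * M by rewrite !addr_ge0 ?mulr_ge0.
have y1 : 1 <= nc y.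
  apply: le_trans hy; rewrite lerDl divr_ge0 ?(ltW hlc0) //.
have hLy : Lc + (`|L| + Sc + nc alpha * M) <= Lc * nc y.
  have := ler_wpM2l (ltW hlc0) hy.
  by rewrite mulrDr mulr1 mulrCA divff ?gt_eqF // mulr1.
have hp := poly_lb y1.
have hb := ncBl P.[y] (alpha * v).
rewrite ncM in hb.
have hav : nc alpha * nc v <= nc alpha * (M * nc y) by rewrite ler_wpM2l.
have hL := ler_norm L.
have hv0 := nc_ge0 v.
set Y := nc y in y1 hy hv hLy hp hav *.
have hY : 0 <= Y by lra.
have := ler_wpM2l hY hLy.
have : Y * `|L| >= Y * L by rewrite ler_wpM2l.
have : Y * Lc > 0 by rewrite mulr_gt0 //; lra.
rewrite -/Lc in hp. nra.
Qed.

End Poly.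

End MH5.
Import MH5.

Module MH6.
Local Open Scope ring_scope.
Local Open Scope ring_scope.
Set Implicit Arguments. Unset Strict Implicit. Unset Printing Implicit Defensive.

Section Nrot.
Variable R : realType.
Definition NN (z : pt R) := nc z.1 ^+ 2 + nc z.2 ^+ 2.

Lemma NN_rot (a : R) z : NN (Defs.rot a z) = NN z.
Proof.
case: z => [[a1 b1] [a2 b2]]; rewrite /NN /Defs.rot /nc /=.
simpc.
rewrite /= !sqr_sqrtr ?addr_ge0 ?sqr_ge0 //.
have H := cos2Dsin2 a.
transitivity ((cos a ^+ 2 + sin a ^+ 2) * (a1 ^+ 2 + b1 ^+ 2 + (a2 ^+ 2 + b2 ^+ 2))).
  by ring.
by rewrite H mul1r.
Qed.
End Nrot.


Section PingPong.
Variable R : realType.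
Variables (P : {poly R[i]}) (delta : R[i]) (t : R).
Hypothesis sP : (2 < size P)%N.
Hypothesis d0 : delta != 0.
Hypothesis s0 : sin t != 0.
Hypothesis c0 : cos t != 0.

Let S := `|sin t|.
Let C := `|cos t|.
Let eta := Num.min S C / 3.
Let B := eta^-1.

Let S0 : 0 < S. Proof. by rewrite normr_gt0. Qed.
Let C0 : 0 < C. Proof. by rewrite normr_gt0. Qed.
Let S1 : S <= 1. Proof. exact: sin_max. Qed.
Let C1 : C <= 1. Proof. exact: cos_max. Qed.
Let eta0 : 0 < eta.
Proof. by rewrite divr_gt0 // lt_min S0 C0. Qed.
Let etaS : 3 * eta <= S.
Proof. by rewrite /eta mulrC divfK ?pnatr_eq0 // ge_min lexx. Qed.
Let etaC : 3 * eta <= C.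
Proof. by rewrite /eta mulrC divfK ?pnatr_eq0 // ge_min lexx orbT. Qed.
Let Beta : B * eta = 1.
Proof. by rewrite mulVf // gt_eqF. Qed.
Let B0 : 0 < B.
Proof. by rewrite invr_gt0. Qed.

Ltac facts := pose proof etaS; pose proof etaC; pose proof S1; pose proof C1;
  pose proof eta0; pose proof S0; pose proof C0; pose proof B0; pose proof Beta.

Definition D1 (z : pt R) := nc z.1 < eta * nc z.2.
Definition D3 (z : pt R) := nc z.2 < eta * nc z.1.
Local Notation rt := (Defs.rot t).

Definition Dom (l : 'I_4) (z : pt R) :=
  match val l with
  | 0%N => D1 z
  | 1%N => D1 (rt z)
  | 2%N => D3 z
  | _ => D3 (rt z)
  end.

Lemma rt1 z : (rt z).1 = ((cos t)%:C%C * z.1 + ((- sin t)%:C%C) * z.2).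
Proof. by rewrite /Defs.rot /= rmorphN mulNr. Qed.
Lemma rt2 z : (rt z).2 = ((sin t)%:C%C * z.1 + ((cos t)%:C%C) * z.2).
Proof. by []. Qed.

Lemma nc_lin_lb2 (a b : R) x y :
  `|a| * nc x - `|b| * nc y <= nc ((a%:C)%C * x + (b%:C)%C * y).
Proof. by have := @nc_lin_lb _ b a y x; rewrite [(b%:C)%C * y + _]addrC. Qed.

Lemma D13 z : D1 z -> D3 z -> False.
Proof.
rewrite /D1 /D3 => h1 h3; facts.
by apply: (@Lgen _ (nc z.1) (nc z.2) eta 1 0 1 0) => //; try lra; rewrite ?nc_ge0.
Qed.

Lemma rt_bounds1 z :
  [/\ S * nc z.2 - C * nc z.1 <= nc (rt z).1,
      C * nc z.1 - S * nc z.2 <= nc (rt z).1 &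
      nc (rt z).1 <= C * nc z.1 + S * nc z.2].
Proof.
rewrite rt1; split.
- by have := @nc_lin_lb _ (cos t) (- sin t) z.1 z.2; rewrite normrN.
- by have := @nc_lin_lb2 (cos t) (- sin t) z.1 z.2; rewrite normrN.
- by have := @nc_lin_ub _ (cos t) (- sin t) z.1 z.2; rewrite normrN.
Qed.

Lemma rt_bounds2 z :
  [/\ C * nc z.2 - S * nc z.1 <= nc (rt z).2,
      S * nc z.1 - C * nc z.2 <= nc (rt z).2 &
      nc (rt z).2 <= S * nc z.1 + C * nc z.2].
Proof.
rewrite rt2; split.
- exact: nc_lin_lb.
- exact: nc_lin_lb2.
- exact: nc_lin_ub.
Qed.

Lemma D12 z : D1 z -> D1 (rt z) -> False.
Proof.
rewrite /D1 => h1 h2; facts; have [b1 b2 b3] := rt_bounds1 z; have [b4 b5 b6] := rt_bounds2 z.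
apply: (@Lgen _ (nc z.1) (nc z.2) eta S C S C); rewrite ?nc_ge0 //; try lra.
have : eta * nc (rt z).2 <= eta * (S * nc z.1 + C * nc z.2) by rewrite ler_wpM2l // ltW.
lra.
Qed.

Lemma D14 z : D1 z -> D3 (rt z) -> False.
Proof.
rewrite /D1 /D3 => h1 h2; facts; have [b1 b2 b3] := rt_bounds1 z; have [b4 b5 b6] := rt_bounds2 z.
apply: (@Lgen _ (nc z.1) (nc z.2) eta C S C S); rewrite ?nc_ge0 //; try lra.
have : eta * nc (rt z).1 <= eta * (C * nc z.1 + S * nc z.2) by rewrite ler_wpM2l // ltW.
lra.
Qed.

Lemma D32 z : D3 z -> D1 (rt z) -> False.
Proof.
rewrite /D1 /D3 => h1 h2; facts; have [b1 b2 b3] := rt_bounds1 z; have [b4 b5 b6] := rt_bounds2 z.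
apply: (@Lgen _ (nc z.2) (nc z.1) eta C S C S); rewrite ?nc_ge0 //; try lra.
have : eta * nc (rt z).2 <= eta * (S * nc z.1 + C * nc z.2) by rewrite ler_wpM2l // ltW.
lra.
Qed.

Lemma D34 z : D3 z -> D3 (rt z) -> False.
Proof.
rewrite /D1 /D3 => h1 h2; facts; have [b1 b2 b3] := rt_bounds1 z; have [b4 b5 b6] := rt_bounds2 z.
apply: (@Lgen _ (nc z.2) (nc z.1) eta S C S C); rewrite ?nc_ge0 //; try lra.
have : eta * nc (rt z).1 <= eta * (C * nc z.1 + S * nc z.2) by rewrite ler_wpM2l // ltW.
lra.
Qed.

Lemma Dom_disj l m z : Dom l z -> Dom m z -> l = m.
Proof.
case: l => [[|[|[|[|n]]]] Hl]; case: m => [[|[|[|[|k]]]] Hm] //=;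
  rewrite /Dom /= => h1 h2; try (by apply: val_inj);
  exfalso.
- exact: D12 h1 h2.
- exact: D13 h1 h2.
- exact: D14 h1 h2.
- exact: D12 h2 h1.
- exact: D32 h2 h1.
- exact: D13 h1 h2.
- exact: D13 h2 h1.
- exact: D32 h1 h2.
- exact: D34 h1 h2.
- exact: D14 h2 h1.
- exact: D13 h2 h1.
- exact: D34 h2 h1.
Qed.


Section Maps.
Variable R0 : R.
Hypothesis R01 : 1 <= R0.
Hypothesis g1 : forall y v, R0 <= nc y -> nc v <= B * nc y ->
  B * nc y < nc (P.[y] - delta * v).
Hypothesis g2 : forall y v, R0 <= nc y -> nc v <= B * nc y ->
  (B * nc delta) * nc y < nc (P.[y] - 1 * v).
Let K := (B ^+ 2 + 1) * R0 ^+ 2.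

Lemma big_coord (X Y : R) : 0 <= X -> 0 <= Y -> X <= B * Y ->
  K < X ^+ 2 + Y ^+ 2 -> R0 <= Y.
Proof.
move=> X0 Y0 hXY hK; facts; rewrite leNgt; apply/negP => hY.
have h1 : X * X <= (B * Y) * (B * Y) by apply: ler_pM.
have h2 : Y * Y <= R0 * R0 by apply: ler_pM => //; lra.
have h3 : B * B * (Y * Y) <= B * B * (R0 * R0) by rewrite ler_wpM2l // mulr_ge0 // ltW.
move: hK; rewrite /K !expr2; nra.
Qed.

Lemma map_h1 z : K < NN z -> ~ D3 z -> D1 (h1 P delta z) /\ NN z < NN (h1 P delta z).
Proof.
case: z => x y; rewrite /D3 /D1 /NN /h1 /= => hK hD; facts.
have hx : eta * nc x <= nc y by rewrite leNgt; apply/negP.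
have hxB : nc x <= B * nc y.
  by have := ler_wpM2l (ltW B0) hx; rewrite mulrA Beta mul1r.
have hy := big_coord (nc_ge0 _) (nc_ge0 _) hxB hK.
have hW := g1 hy hxB.
have X0 := nc_ge0 x; have Y0 := nc_ge0 y.
split.
  by move: hW; rewrite -(ltr_pM2l eta0) mulrA (mulrC eta) Beta mul1r.
have : nc x * nc x < nc (P.[y] - delta * x) * nc (P.[y] - delta * x).
  apply: ltr_pM => //; lra.
rewrite !expr2; lra.
Qed.

Lemma map_h1inv z : K < NN z -> ~ D1 z -> D3 (h1inv P delta z) /\ NN z < NN (h1inv P delta z).
Proof.
case: z => x y; rewrite /D3 /D1 /NN /h1inv /= => hK hD; facts.
have hy : eta * nc y <= nc x by rewrite leNgt; apply/negP.
have hyB : nc y <= B * nc x.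
  by have := ler_wpM2l (ltW B0) hy; rewrite mulrA Beta mul1r.
have hK' : K < nc y ^+ 2 + nc x ^+ 2 by rewrite addrC.
have hx := big_coord (nc_ge0 _) (nc_ge0 _) hyB hK'.
have hV := g2 hx hyB; rewrite mul1r in hV.
have dpos : 0 < nc delta by rewrite lt_def nc_ge0 andbT nc_eq0.
have hV' : B * nc x < nc ((P.[x] - y) / delta).
  rewrite ncM ncV ltr_pdivlMr //; by rewrite mulrAC.
have X0 := nc_ge0 x; have Y0 := nc_ge0 y.
split.
  by move: hV'; rewrite -(ltr_pM2l eta0) mulrA (mulrC eta) Beta mul1r.
have : nc y * nc y < nc ((P.[x] - y) / delta) * nc ((P.[x] - y) / delta).
  apply: ltr_pM => //; lra.
rewrite !expr2; lra.
Qed.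

Lemma map_letter l z : K < NN z -> ~ Dom (invl l) z ->
  Dom l (letter P delta t l z) /\ NN z < NN (letter P delta t l z).
Proof.
case: l => [[|[|[|[|n]]]] Hl] //=; rewrite /Dom /letter /= => hK hD.
- exact: map_h1.
- rewrite /h2 /rotinv /= rotK !NN_rot -(NN_rot t z).
  by apply: map_h1 => //; rewrite NN_rot.
- exact: map_h1inv.
- rewrite /h2inv /rotinv /= rotK !NN_rot -(NN_rot t z).
  by apply: map_h1inv => //; rewrite NN_rot.
Qed.

Lemma pingpong s : forall l, reduced (l :: s) -> forall z, K < NN z ->
  ~ Dom (invl (last l s)) z ->
  Dom l (word_eval P delta t (l :: s) z) /\ NN z < NN (word_eval P delta t (l :: s) z).
Proof.
elim: s => [|m s IH] l hr z hK hD.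
  exact: map_letter.
move: hr => /= /andP[hml hr].
have [h1 h2] := IH m hr z hK hD.
rewrite /= /comp.
have hD' : ~ Dom (invl l) (word_eval P delta t (m :: s) z).
  move=> hd; have e := Dom_disj hd h1.
  by move/eqP: hml; apply; rewrite -e.
have [h3 h4] := map_letter (lt_trans hK h2) hD'.
split => //; exact: lt_trans h2 h4.
Qed.

Lemma K0 : 0 <= K.
Proof. by rewrite /K mulr_ge0 // ?addr_ge0 ?sqr_ge0. Qed.

Lemma NN_pair a b : NN ((a, b) : pt R) = nc a ^+ 2 + nc b ^+ 2.
Proof. by []. Qed.
Lemma D1_pair a b : D1 ((a, b) : pt R) = (nc a < eta * nc b).
Proof. by []. Qed.
Lemma D3_pair a b : D3 ((a, b) : pt R) = (nc b < eta * nc a).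
Proof. by []. Qed.

Lemma start_pt k : exists z, K < NN z /\ ~ Dom k z.
Proof.
pose X := K + 1.
have X0 : 0 < X by rewrite /X; have := K0; lra.
have hX : K < X ^+ 2.
  have := K0; rewrite /X => hk0; nra.
have Xn : nc (X%:C%C) = X by rewrite ncR gtr0_norm.
have NNa : K < NN ((X%:C%C, 0) : pt R) by rewrite NN_pair nc0 Xn expr0n /= addr0.
have NNb : K < NN ((0, X%:C%C) : pt R) by rewrite NN_pair nc0 Xn expr0n /= add0r.
have Da : Dom (Ordinal (isT : (2 < 4)%N)) ((X%:C%C, 0) : pt R).
  by rewrite /Dom [val _]/= D3_pair nc0 Xn mulr_gt0.
have Db : Dom (Ordinal (isT : (0 < 4)%N)) ((0, X%:C%C) : pt R).
  by rewrite /Dom [val _]/= D1_pair nc0 Xn mulr_gt0.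
have [e|ne] := eqVneq k (Ordinal (isT : (2 < 4)%N)).
  exists (0, X%:C%C); split => // hd; have := Dom_disj hd Db; rewrite e => /(congr1 val) //.
exists (X%:C%C, 0); split => // hd; have := Dom_disj hd Da => e.
by move/eqP: ne; apply.
Qed.

Lemma free_K s : reduced s -> (forall z, word_eval P delta t s z = z) -> s = [::].
Proof.
case: s => // l s hr he.
have [z [hK hD]] := start_pt (invl (last l s)).
have [_ h] := pingpong hr hK hD.
by move: h; rewrite he ltxx.
Qed.

End Maps.

Lemma free_words s : reduced s -> (forall z, word_eval P delta t s z = z) -> s = [::].
Proof.
have [R1 [R11 h1]] := poly_growth sP delta B (ltW B0).
have [R2 [R21 h2]] := poly_growth sP 1 (B * nc delta) (ltW B0).
pose R0 := Num.max R1 R2.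
apply: (@free_K R0).
- by move=> y v hy hv; apply: h1 => //; apply: le_trans hy; rewrite le_max lexx.
- by move=> y v hy hv; apply: h2 => //; apply: le_trans hy; rewrite le_max lexx orbT.
Qed.

End PingPong.

End MH6.
Import MH6.

Module MH7.
Local Open Scope ring_scope.
Local Open Scope ring_scope.
Set Implicit Arguments. Unset Strict Implicit. Unset Printing Implicit Defensive.

Lemma genG (R : realFieldType) (am ai ap aq mn u : R) :
  0 < mn -> mn <= am -> mn <= ai -> mn <= ap -> mn <= aq ->
  am + ai + ap + aq = 1 -> u = mn / 4 ->
  am * (1 - u) ^+ (ai <= am)%R * (1 - u) ^+ (ai <= am)%R
  + ap * (1 - u) ^+ (aq <= ap)%R * (1 - u) ^+ (ai <= am)%R
  + aq * (1 - u) ^+ (ap <= aq)%R * (1 - u) ^+ (ai <= am)%R + ai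
  <= (1 - u * mn / 2) * (1 - u) ^+ (ai <= am)%R.
Proof.
move=> mn0 h1 h2 h3 h4 hs hu.
have u0 : 0 < u by rewrite hu; lra.
have mn14 : mn <= 1/4 by lra.
have hum : u * am <= am / 16 by nra.
have hui : u * ai <= ai / 16 by nra.
have hup : u * ap <= ap / 16 by nra.
have huq : u * aq <= aq / 16 by nra.
case: (leP ai am) => hmi; case: (leP aq ap) => hpq; case: (leP ap aq) => hqp;
  rewrite /= ?expr1 ?expr0 ?mulr1; try lra; nra.
Qed.

Lemma genE (R : realFieldType) (a0 a1 a2 a3 mn u : R) :
  0 < mn -> mn <= a0 -> mn <= a1 -> mn <= a2 -> mn <= a3 ->
  a0 + a1 + a2 + a3 = 1 -> u = mn / 4 ->
  a0 * (1 - u) ^+ (a2 <= a0)%R + a1 * (1 - u) ^+ (a3 <= a1)%R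
  + a2 * (1 - u) ^+ (a0 <= a2)%R + a3 * (1 - u) ^+ (a1 <= a3)%R
  <= 1 - u * mn / 2.
Proof.
move=> mn0 h1 h2 h3 h4 hs hu.
have u0 : 0 < u by rewrite hu; lra.
case: (leP a2 a0) => h02; case: (leP a0 a2) => h20;
case: (leP a3 a1) => h13; case: (leP a1 a3) => h31;
  rewrite /= ?expr1 ?expr0 ?mulr1; try lra; nra.
Qed.

End MH7.
Import MH7.

Module MH8.
Local Open Scope ring_scope.
Local Open Scope ring_scope.
Set Implicit Arguments. Unset Strict Implicit. Unset Printing Implicit Defensive.

Definition o0 : 'I_4 := @Ordinal 4 0 isT.
Definition o1 : 'I_4 := @Ordinal 4 1 isT.
Definition o2 : 'I_4 := @Ordinal 4 2 isT.
Definition o3 : 'I_4 := @Ordinal 4 3 isT.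

Lemma enum4 : enum 'I_4 = [:: o0; o1; o2; o3].
Proof. by apply: (inj_map val_inj); rewrite val_enum_ord. Qed.

Lemma invl0 : invl o0 = o2. Proof. exact: val_inj. Qed.
Lemma invl1 : invl o1 = o3. Proof. exact: val_inj. Qed.
Lemma invl2 : invl o2 = o0. Proof. exact: val_inj. Qed.
Lemma invl3 : invl o3 = o1. Proof. exact: val_inj. Qed.

Lemma ord4P (l : 'I_4) : [\/ l = o0, l = o1, l = o2 | l = o3].
Proof.
case: l => [[|[|[|[|n]]]] Hl] //.
- by constructor 1; apply: val_inj.
- by constructor 2; apply: val_inj.
- by constructor 3; apply: val_inj.
- by constructor 4; apply: val_inj.
Qed.

Lemma sum4 (R : nmodType) (F : 'I_4 -> R) : \sum_(i < 4) F i = F o0 + F o1 + F o2 + F o3.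
Proof.
rewrite !big_ord_recl big_ord0 addr0 !addrA.
by congr (_ + _ + _ + _); apply: congr1; apply: val_inj.
Qed.

Section Comb.
Variable R : realType.
Variable a : 'I_4 -> R.
Hypothesis ha : forall i, 0 < a i.
Hypothesis hsum : \sum_(i < 4) a i = 1.

Definition mn := Num.min (Num.min (a o0) (a o1)) (Num.min (a o2) (a o3)).
Lemma mn_le i : mn <= a i.
Proof.
rewrite /mn; case: (ord4P i) => ->;
  rewrite !ge_min ?lexx ?orbT //.
Qed.
Lemma mn_gt0 : 0 < mn.
Proof. by rewrite /mn !lt_min !ha. Qed.
Lemma hsum4 : a o0 + a o1 + a o2 + a o3 = 1.
Proof. by rewrite -sum4. Qed.

Definition uu := mn / 4.
Definition rr := 1 - uu.
Definition rho := 1 - uu * mn / 2.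
Definition cc (l : 'I_4) : bool := (a (invl l) <= a l)%R.
Definition FF (st : seq 'I_4) : R := rr ^+ count cc st.

Lemma FF_push_cons l m st :
  FF (push l (m :: st)) = if m == invl l then FF st else rr ^+ cc l * rr ^+ cc m * FF st.
Proof.
rewrite /push; case: ifP => // _.
by rewrite /FF /= !exprD mulrA.
Qed.

Lemma step st : \sum_(l <- enum 'I_4) a l * FF (push l st) <= rho * FF st.
Proof.
have mn0 := mn_gt0.
have h0 := mn_le o0; have h1 := mn_le o1; have h2 := mn_le o2; have h3 := mn_le o3.
have hs := hsum4.
rewrite enum4 !big_cons big_nil addr0.
case: st => [|m st].
  rewrite /FF /= /cc invl0 invl1 invl2 invl3 !addn0 expr0 mulr1.
  have := @genE R (a o0) (a o1) (a o2) (a o3) mn uu mn0 h0 h1 h2 h3 hs erefl.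
  rewrite /rho /rr; lra.
rewrite !FF_push_cons.
have F0 : 0 <= FF st by rewrite /FF exprn_ge0 // /rr /uu; have := hsum4; have := mn_le o0; lra.
have FFm : FF (m :: st) = rr ^+ cc m * FF st by rewrite /FF /= exprD.
rewrite FFm /cc.
case: (ord4P m) => ->; rewrite invl0 invl1 invl2 invl3 /=.
- have := @genG R (a o0) (a o2) (a o1) (a o3) mn uu mn0 h0 h2 h1 h3 ltac:(lra) erefl.
  rewrite -/rr -/rho => H.
  have := ler_wpM2r F0 H; lra.
- have := @genG R (a o1) (a o3) (a o0) (a o2) mn uu mn0 h1 h3 h0 h2 ltac:(lra) erefl.
  rewrite -/rr -/rho => H.
  have := ler_wpM2r F0 H; lra.
- have := @genG R (a o2) (a o0) (a o1) (a o3) mn uu mn0 h2 h0 h1 h3 ltac:(lra) erefl.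
  rewrite -/rr -/rho => H.
  have := ler_wpM2r F0 H; lra.
- have := @genG R (a o3) (a o1) (a o0) (a o2) mn uu mn0 h3 h1 h0 h2 ltac:(lra) erefl.
  rewrite -/rr -/rho => H.
  have := ler_wpM2r F0 H; lra.
Qed.
Lemma rho_gt0 : 0 < rho.
Proof.
have := mn_gt0; have := mn_le o0; have := hsum4; have := ha o1; have := ha o2; have := ha o3.
rewrite /rho /uu => *; nra.
Qed.

Lemma rho_lt1 : rho < 1.
Proof. have := mn_gt0; rewrite /rho /uu => *; nra. Qed.

Lemma rr_ge : 1 / 2 <= rr /\ rr <= 1.
Proof.
have := mn_gt0; have := mn_le o0; have := hsum4; have := ha o1; have := ha o2; have := ha o3.
rewrite /rr /uu => *; split; lra.
Qed.

Lemma a_ge0 l : 0 <= a l. Proof. exact: ltW. Qed.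

Fixpoint GG n st : R :=
  if n is n'.+1 then \sum_(l <- enum 'I_4) a l * GG n' (push l st) else FF st.

Lemma GG_le n st : GG n st <= rho ^+ n * FF st.
Proof.
elim: n st => [|n IH] st /=; first by rewrite expr0 mul1r.
apply: (@le_trans _ _ (\sum_(l <- enum 'I_4) a l * (rho ^+ n * FF (push l st)))).
  by apply: ler_sum => l _; apply: ler_wpM2l; [exact: a_ge0 | exact: IH].
have -> : \sum_(l <- enum 'I_4) a l * (rho ^+ n * FF (push l st)) =
  rho ^+ n * \sum_(l <- enum 'I_4) a l * FF (push l st).
  by rewrite mulr_sumr; apply: eq_bigr => l _; rewrite mulrCA.
rewrite exprSr -mulrA; apply: ler_wpM2l; last exact: step.
by rewrite exprn_ge0 // ltW // rho_gt0.
Qed.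

Fixpoint words n : seq (seq 'I_4) :=
  if n is n'.+1 then [seq l :: w | l <- enum 'I_4, w <- words n'] else [:: [::]].

Definition run (st : seq 'I_4) (w : seq 'I_4) := foldl (fun s l => push l s) st w.
Definition wprod (w : seq 'I_4) : R := \prod_(l <- w) a l.

Lemma wprod_ge0 w : 0 <= wprod w.
Proof. by apply: prodr_ge0 => l _; exact: a_ge0. Qed.

Lemma FF_ge0 st : 0 <= FF st.
Proof. by rewrite /FF exprn_ge0 //; have [h _] := rr_ge; lra. Qed.

Lemma sum_words n st : \sum_(w <- words n) wprod w * FF (run st w) = GG n st.
Proof.
elim: n st => [|n IH] st; first by rewrite /= big_seq1 /wprod big_nil mul1r.
rewrite /= big_allpairs_dep; apply: eq_bigr => l _.
rewrite -IH big_distrr /=; apply: eq_bigr => w _.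
by rewrite /wprod big_cons /run /= mulrA.
Qed.

Lemma words_mem n w : size w = n -> w \in words n.
Proof.
elim: n w => [|n IH] [|l w] //= [hw].
by apply: (allpairs_f_dep (fun l w => l :: w)); rewrite ?mem_enum // IH.
Qed.

Lemma bern (x : R) n : 0 <= x -> 1 + n%:R * x <= (1 + x) ^+ n.
Proof.
move=> x0; elim: n => [|n IH]; first by rewrite mul0r addr0 expr0.
rewrite exprS -natr1 mulrDl mul1r.
have h : 0 <= (1 + x) by lra.
have := ler_wpM2l h IH.
have : 0 <= n%:R * x * x by rewrite mulr_ge0 // mulr_ge0.
nra.
Qed.

Definition gam := Num.sqrt rho.

Lemma gam_gt0 : 0 < gam.
Proof. by rewrite sqrtr_gt0 rho_gt0. Qed.
Lemma gam_lt1 : gam < 1.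
Proof. by rewrite /gam -sqrtr1 ltr_sqrt // rho_lt1. Qed.
Lemma gam2 : gam ^+ 2 = rho.
Proof. by rewrite sqr_sqrtr // ltW // rho_gt0. Qed.

Lemma exists_N : exists N : nat, (0 < N)%N /\ gam ^+ N <= rr.
Proof.
have g0 := gam_gt0; have g1 := gam_lt1.
pose dd := gam^-1 - 1.
have dd0 : 0 < dd.
  by rewrite /dd subr_gt0 invf_gt1.
exists (Num.trunc (dd^-1)).+1; split => //.
set N := (Num.trunc _).+1.
have hN : dd^-1 < N%:R by apply: truncnS_gt.
have hNd : 1 <= N%:R * dd.
  have := ltr_pM2r dd0; move=> hm.
  by have := hN; rewrite -hm mulVf ?gt_eqF // => /ltW.
have hb := bern N (ltW dd0).
have e : gam ^+ N * (1 + dd) ^+ N = 1.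
  by rewrite -exprMn /dd addrC subrK divff ?gt_eqF // expr1n.
have gN : 0 <= gam ^+ N by rewrite exprn_ge0 // ltW.
have [hr _] := rr_ge.
nra.
Qed.

Section Bad.
Variable N : nat.
Hypothesis hN : gam ^+ N <= rr.

Definition bad n w := (N * size (run [::] w) < n)%N.

Lemma bad_sum n : \sum_(w <- words n | bad n w) wprod w <= gam ^+ n.
Proof.
have g0 := gam_gt0; have g1 := gam_lt1.
have [hr1 hr2] := rr_ge.
have key : forall w, bad n w -> gam ^+ n <= FF (run [::] w).
  move=> w; rewrite /bad => hb.
  set s := size (run [::] w) in hb *.
  apply: (@le_trans _ _ (rr ^+ s)).
    apply: (@le_trans _ _ ((gam ^+ N) ^+ s)).
      rewrite -exprM; apply: ler_wiXn2l; rewrite ?(ltW g0) ?(ltW g1) //.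
      exact: ltnW.
    by apply: lerXn2r => //; rewrite ?nnegrE ?exprn_ge0 ?ltW //; lra.
  rewrite /FF; apply: ler_wiXn2l; try lra.
  exact: count_size.
have hgn : 0 < gam ^+ n by rewrite exprn_gt0.
rewrite -(ler_pM2l hgn).
apply: (@le_trans _ _ (\sum_(w <- words n) wprod w * FF (run [::] w))).
  rewrite mulr_sumr big_mkcond /=; apply: ler_sum => w _.
  case: ifP => hb; last by rewrite mulr_ge0 ?wprod_ge0 ?FF_ge0.
  by rewrite mulrC ler_wpM2l ?wprod_ge0 ?key.
rewrite sum_words; apply: (le_trans (GG_le _ _)).
by rewrite /FF /= expr0 mulr1 -gam2 -exprM mulnC exprM expr2.
Qed.

End Bad.

End Comb.

End MH8.
Import MH8.

Module MH9.
Local Open Scope ring_scope.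
Local Open Scope ring_scope.
Local Open Scope classical_set_scope.
Set Implicit Arguments. Unset Strict Implicit. Unset Printing Implicit Defensive.

Section Meas.
Variable R : realType.
Variable a : 'I_4 -> R.
Hypothesis ha : forall i, 0 < a i.
Hypothesis hsum : \sum_(i < 4) a i = 1.
Variables (d : measure_display) (T : measurableType d) (Pr : probability T R).
Variable X : nat -> T -> 'I_4.
Hypothesis hX : iid_letters Pr X a.
Variable N : nat.
Hypothesis hN : gam a ^+ N <= rr a.

Definition Cyl n (w : seq 'I_4) := [set om | forall k : 'I_n, X k om = nth o0 w k].

Lemma Cyl_meas n w : measurable (Cyl n w).
Proof.
have -> : Cyl n w = \bigcap_k (if (k < n)%N then X k @^-1` [set nth o0 w k] else setT).
  apply/seteqP; split => om /=.
    move=> h k _; case: ifP => hk //; exact: (h (Ordinal hk)).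
  by move=> h k; have := h k I; rewrite ltn_ord.
apply: bigcapT_measurable => k; case: ifP => _; last exact: measurableT.
exact: hX.1.
Qed.

Lemma words_size n w : w \in words n -> size w = n.
Proof.
elim: n w => [|n IH] w /=; first by rewrite inE => /eqP ->.
by move/allpairsPdep => [l [w' [_ hw' ->]]] /=; rewrite IH.
Qed.

Lemma Cyl_Pr n w : size w = n -> Pr (Cyl n w) = (wprod a w)%:E.
Proof.
move=> hs; rewrite /Cyl (hX.2 n (fun k => nth o0 w k)).
by rewrite /wprod (big_nth o0) big_mkord hs.
Qed.

Lemma measure_bigsetU_le (I : Type) (s : seq I) (P : pred I) (F : I -> set T) :
  (forall i, measurable (F i)) ->
  (Pr (\big[setU/set0]_(i <- s | P i) F i) <= \sum_(i <- s | P i) Pr (F i))%E.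
Proof.
move=> mF; elim: s => [|i s IH]; first by rewrite !big_nil measure0.
rewrite !big_cons; case: ifP => _ //.
apply: (le_trans (measureU2 _ _ _)) => //.
  by apply: bigsetU_measurable.
exact: leeD2l.
Qed.

Definition BadSet n := \big[setU/set0]_(w <- words n | bad N n w) Cyl n w.

Lemma BadSet_meas n : measurable (BadSet n).
Proof. by apply: bigsetU_measurable => w _; exact: Cyl_meas. Qed.

Lemma BadSet_Pr n : (Pr (BadSet n) <= (gam a ^+ n)%:E)%E.
Proof.
apply: le_trans; first by apply: measure_bigsetU_le; exact: Cyl_meas.
rewrite big_seq_cond (eq_bigr (fun w => (wprod a w)%:E)); last first.
  by move=> w /andP[hw _]; rewrite Cyl_Pr // (words_size hw).
rewrite -big_seq_cond sumEFin lee_fin.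
exact: bad_sum.
Qed.

Lemma BadSet_series : (\sum_(n <oo) Pr (BadSet n) < +oo)%E.
Proof.
have g0 := gam_gt0 ha hsum; have g1 := gam_lt1 ha.
apply: (@le_lt_trans _ _ (\sum_(n <oo) ((gam a ^+ n)%:E))%E).
  apply: lee_nneseries => n _ //; exact: BadSet_Pr.
apply: (@le_lt_trans _ _ ((1 - gam a)^-1)%:E); last exact: ltry.
apply: lime_le.
  by apply: is_cvg_nneseries => n _ _; rewrite lee_fin exprn_ge0 // ltW.
apply: nearW => n; rewrite sumEFin lee_fin.
have := @geometric_le_lim R n 1 (gam a) ler01 g0.
rewrite gtr0_norm // => /(_ g1); rewrite mul1r.
apply: le_trans; rewrite /series /= le_eqVlt; apply/orP; left; apply/eqP.
by apply: eq_bigr => k _; rewrite /geometric /= mul1r.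
Qed.

Lemma limsup_null : Pr (lim_sup_set BadSet) = 0%E.
Proof.
apply: lim_sup_set_cvg0; first exact: BadSet_meas.
exact: BadSet_series.
Qed.

End Meas.

End MH9.
Import MH9.

Module MH10.
Local Open Scope ring_scope.
Local Open Scope ring_scope.
Local Open Scope classical_set_scope.
Set Implicit Arguments. Unset Strict Implicit. Unset Printing Implicit Defensive.

Fixpoint wseq (Y : nat -> 'I_4) n : seq 'I_4 :=
  if n is n'.+1 then Y n' :: wseq Y n' else [::].

Lemma walk_eq (R : realType) P delta t (Y : nat -> 'I_4) n :
  @walk R P delta t Y n = word_eval P delta t (wseq Y n).
Proof. by elim: n => //= n ->. Qed.

Definition xs (Y : nat -> 'I_4) n := [seq Y k | k <- iota 0 n].

Lemma run_xs Y n : run [::] (xs Y n) = red (wseq Y n).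
Proof.
elim: n => // n IH.
rewrite /xs; have -> : iota 0 n.+1 = iota 0 n ++ [:: n] by rewrite -addn1 iotaD.
rewrite map_cat /run foldl_cat; move: IH; rewrite /run /xs => ->.
by [].
Qed.

Lemma in_bigsetU (T : Type) (I : eqType) (s : seq I) (P : pred I) (F : I -> set T) i x :
  i \in s -> P i -> F i x -> (\big[setU/set0]_(j <- s | P j) F j) x.
Proof.
elim: s => // j s IH; rewrite inE => /orP[/eqP <-|hi] hP hF; rewrite big_cons.
  by rewrite hP; left.
by case: ifP => _; [right|]; apply: IH.
Qed.

End MH10.
Import MH10.

Theorem mainTheorem3 (R : realType) (P : {poly R[i]}) (delta : R[i]) (t : R)
  (a : 'I_4 -> R) :
  (2 < size P)%N -> delta != 0 ->
  0 < t -> t < 2 * pi -> t != pi / 2 -> t != pi -> t != 3 * pi / 2 ->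
  (forall i, 0 < a i) -> \sum_(i < 4) a i = 1 ->
  exists2 eps : R, 0 < eps &
    forall (d : measure_display) (T : measurableType d) (Pr : probability T R)
           (X : nat -> T -> 'I_4),
      iid_letters Pr X a ->
      {ae Pr, forall w,
         (forall M : nat, exists n : nat, (M < word_length P delta t (walk P delta t (X ^~ w) n))%N) /\
         (exists n0 : nat, forall n : nat, (n0 <= n)%N ->
            eps * n%:R <= (word_length P delta t (walk P delta t (X ^~ w) n))%:R)}.
Proof.
move=> sP d0 t0 t2 th tpi t3h ha hsum.
have s0 := sin_neq0 t0 t2 tpi.
have c0 := cos_neq0 t0 t2 th t3h.
have [N [N0 hN]] := exists_N ha hsum.
exists (N%:R^-1); first by rewrite invr_gt0 ltr0n.
move=> d T Pr X hX.
have lk := @letterK R P delta t d0.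
have fr := @free_words R P delta t sP d0 s0 c0.
rewrite /prop_near1 /nbhs /=.
exists (lim_sup_set (BadSet X N)); split.
- rewrite /lim_sup_set; apply: bigcapT_measurable => n; apply: bigcup_measurable => j _.
  exact: (BadSet_meas hX).
- exact: (limsup_null ha hsum hX hN).
move=> om /= hG n _.
apply: contrapT => hno; apply: hG.
have good : forall j, (n <= j)%N -> (j <= N * size (red (wseq (X^~ om) j)))%N.
  move=> j hj; rewrite leqNgt; apply/negP => hb; apply: hno; exists j => //.
  apply: (@in_bigsetU _ _ _ _ _ (xs (X^~ om) j)).
  - by apply: words_mem; rewrite size_map size_iota.
  - by rewrite /bad run_xs.
  - move=> k; rewrite /xs (nth_map 0%N) ?size_iota // nth_iota //.
have hlen : forall j, (size (red (wseq (X^~ om) j)) <=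
    word_length P delta t (walk P delta t (X^~ om) j))%N.
  by move=> j; rewrite walk_eq; apply: word_length_ge.
split.
  move=> M; exists (maxn n (N * M.+1)).
  have g := good _ (leq_maxl n (N * M.+1)).
  have h := hlen (maxn n (N * M.+1)).
  have g2 : (N * M.+1 <= N * size (red (wseq (X^~ om) (maxn n (N * M.+1)))))%N.
    exact: leq_trans (leq_maxr _ _) g.
  rewrite leq_pmul2l // in g2.
  exact: leq_trans g2 h.
exists n => j hj.
have g := good j hj; have h := hlen j.
have N0' : (0 : R) < N%:R by rewrite ltr0n.
rewrite mulrC ler_pdivrMr // -natrM ler_nat.
apply: (leq_trans g); rewrite mulnC leq_mul2r h orbT //.
Qed.
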